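(* For every $n\ge1$ and all polynomials $f_1,g_1,f_2,g_2$ of degree at most $n$, there exist real polynomials $\alpha,\beta,\gamma,\delta$ in $h$ with $\deg\alpha,\deg\gamma\le[\frac n2]$, $\deg\beta,\deg\delta\le[\frac{n-1}{2}]$, and a real polynomial $\varphi$ of degree at most $n-1$, such that for all $h\in(0,+\infty)$, $$M(h)=\alpha(h)U_{0,0}(h)+\beta(h)U_{0,1}(h)+\gamma(h)V_{0,0}(h)+\delta(h)V_{0,1}(h)+\Big(\tfrac{\sqrt{1+4h}-1}{2}\Big)^{3/2}\varphi\Big(\tfrac{\sqrt{1+4h}-1}{2}\Big).$$
   Context: Consider the system with the single switching curve $y=x^2$: $\dot x=y+\varepsilon f_1(x,y)$, $\dot y=-x+\varepsilon g_1(x,y)$ for $y<x^2$, and $\dot x=y+\varepsilon f_2(x,y)$, $\dot y=-x+\varepsilon g_2(x,y)$ for $y>x^2$, where $f_1,g_1,f_2,g_2$ are real polynomials of degree at most $n$. For $h>0$ let $u=\sqrt{(\sqrt{1+4h}-1)/2}$, $\Gamma_h$ the circle $x^2+y^2=h$, $A=(u,u^2)$, $D=(-u,u^2)$. Let $\widehat{AD}$ be the arc of $\Gamma_h$ traversed clockwise from $A$ to $D$ through $(\sqrt h,0),(0,-\sqrt h),(-\sqrt h,0)$, and $\widehat{DA}$ the arc traversed clockwise from $D$ to $A$ through $(0,\sqrt h)$. The first order Melnikov function is $M(h)=\int_{\widehat{AD}}g_1dx-f_1dy+\int_{\widehat{DA}}g_2dx-f_2dy$, and for integers $i,j\ge0$,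 $U_{i,j}(h)=\int_{\widehat{AD}}x^iy^jdx$, $V_{i,j}(h)=\int_{\widehat{DA}}x^iy^jdx$. $[p]$ is the integer part of $p$. *)

(* Defs.v *)
From Stdlib Require Import Reals ClassicalEpsilon.
Open Scope R_scope.

(* Oriented Riemann integral int_a^b F (for a <= b), total via choice;
   it agrees with RiemannInt whenever F is Riemann integrable on [a,b]. *)
Definition Rint (F : R -> R) (a b : R) : R :=
  epsilon (inhabits 0)
    (fun I => exists pr : Riemann_integrable F a b, RiemannInt pr = I).

Definition peval2 (n : nat) (c : nat -> nat -> R) (x y : R) : R :=
  sum_f_R0 (fun i => sum_f_R0 (fun j => c i j * x ^ i * y ^ j) n) n.

Definition deg2_le (n : nat) (c : nat -> nat -> R) : Prop :=
  forall i j, (n < i + j)%nat -> c i j = 0.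

Definition peval (d : nat) (a : nat -> R) (t : R) : R :=
  sum_f_R0 (fun k => a k * t ^ k) d.

Definition uu (h : R) : R := sqrt ((sqrt (1 + 4 * h) - 1) / 2).

(* Line integral of  g dx - f dy  along the circle of radius r = sqrt h,
   x = r cos t, y = r sin t, traversed clockwise, i.e. with the angle t
   decreasing from t0 to t1 (t1 < t0). *)
Definition arcint (g f : R -> R -> R) (h t0 t1 : R) : R :=
  let r := sqrt h in
  - Rint (fun t => g (r * cos t) (r * sin t) * (- r * sin t)
                   - f (r * cos t) (r * sin t) * (r * cos t)) t1 t0.

(* A = (u,u^2) has angle atan u; D = (-u,u^2) has angle PI - atan u.
   Arc AD (clockwise, through (sqrt h,0),(0,-sqrt h),(-sqrt h,0)):
   angle from atan u down to -PI - atan u.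
   Arc DA (clockwise, through (0,sqrt h)): angle from PI - atan u down to atan u. *)
Definition int_AD (g f : R -> R -> R) (h : R) : R :=
  arcint g f h (atan (uu h)) (- PI - atan (uu h)).
Definition int_DA (g f : R -> R -> R) (h : R) : R :=
  arcint g f h (PI - atan (uu h)) (atan (uu h)).

Definition melnikov (n : nat) (f1 g1 f2 g2 : nat -> nat -> R) (h : R) : R :=
  int_AD (peval2 n g1) (peval2 n f1) h + int_DA (peval2 n g2) (peval2 n f2) h.

Definition U (i j : nat) (h : R) : R :=
  int_AD (fun x y => x ^ i * y ^ j) (fun _ _ => 0) h.
Definition V (i j : nat) (h : R) : R :=
  int_DA (fun x y => x ^ i * y ^ j) (fun _ _ => 0) h.

(* Main.v *)
Require Import Defs.
From Stdlib Require Import Reals ClassicalEpsilon Arith Lra Lia Psatz FunctionalExtensionality.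
From Coquelicot Require Import Coquelicot.
Open Scope R_scope.

Lemma isd_plus (f g : R -> R) (x df dg : R) : is_derive f x df -> is_derive g x dg ->
  is_derive (fun t => f t + g t) x (df + dg).
Proof. intros; now apply (is_derive_plus f g). Qed.
Lemma isd_scal (f : R -> R) (x k df : R) : is_derive f x df -> is_derive (fun t => k * f t) x (k * df).
Proof. intros; now apply is_derive_scal. Qed.
Lemma isd_ext (f g : R -> R) (x df : R) : (forall t, f t = g t) -> is_derive f x df -> is_derive g x df.
Proof. intros; eapply is_derive_ext; eauto. Qed.
Lemma isd_val (f : R -> R) (x d1 d2 : R) : d1 = d2 -> is_derive f x d1 -> is_derive f x d2.
Proof. intros ->; auto. Qed.
Lemma exd_plus (f g : R -> R) (x : R) : ex_derive f x -> ex_derive g x -> ex_derive (fun t => f t + g t) x.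
Proof. intros; now apply (ex_derive_plus f g). Qed.

Definition X h t := sqrt h * cos t.
Definition Y h t := sqrt h * sin t.

Lemma dmono a b h t : is_derive (fun t => X h t ^ a * Y h t ^ b) t
  (- INR a * X h t ^ (pred a) * Y h t ^ (S b) + INR b * X h t ^ (S a) * Y h t ^ (pred b)).
Proof.
  unfold X, Y. auto_derive; auto.
  destruct a, b; simpl; ring.
Qed.

Lemma peval_S d a t : peval (S d) a t = peval d a t + a (S d) * t ^ (S d).
Proof. reflexivity. Qed.

Lemma peval_eq d a b t : (forall k, (k <= d)%nat -> a k = b k) -> peval d a t = peval d b t.
Proof.
  induction d; intros H.
  - unfold peval; simpl; rewrite (H 0%nat); auto.
  - rewrite !peval_S, IHd, (H (S d)); auto.
Qed.

Lemma peval_plus d a b t : peval d (fun k => a k + b k) t = peval d a t + peval d b t.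
Proof. induction d. unfold peval; simpl; ring. rewrite !peval_S, IHd; ring. Qed.
Lemma peval_scal d c a t : peval d (fun k => c * a k) t = c * peval d a t.
Proof. induction d. unfold peval; simpl; ring. rewrite !peval_S, IHd; ring. Qed.
Lemma peval_mulw d a t : t * peval d a t = peval (S d) (fun k => match k with O => 0 | S k => a k end) t.
Proof.
  induction d.
  - unfold peval; simpl; ring.
  - rewrite peval_S, (peval_S (S d)), <- IHd. simpl; ring.
Qed.
Lemma peval_zero d t : peval d (fun _ => 0) t = 0.
Proof. induction d. unfold peval; simpl; ring. rewrite peval_S, IHd; ring. Qed.
Lemma peval_c0 d a t : (forall k, (1 <= k)%nat -> a k = 0) -> peval d a t = a O.
Proof.
  intro H; induction d. unfold peval; simpl; ring.
  rewrite peval_S, IHd, (H (S d)) by lia; ring.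
Qed.

Definition PolyLe (d : nat) (F : R -> R) := exists a, forall w, F w = peval d a w.

Lemma PolyLe_ext d F G : (forall w, F w = G w) -> PolyLe d F -> PolyLe d G.
Proof. intros H [a Ha]; exists a; intro w; rewrite <- H; auto. Qed.
Lemma PolyLe_zero d : PolyLe d (fun _ => 0).
Proof. exists (fun _ => 0); intro; now rewrite peval_zero. Qed.
Lemma PolyLe_const c : PolyLe 0 (fun _ => c).
Proof. exists (fun _ => c); intro; unfold peval; simpl; ring. Qed.
Lemma PolyLe_plus d F G : PolyLe d F -> PolyLe d G -> PolyLe d (fun w => F w + G w).
Proof. intros [a Ha] [b Hb]; exists (fun k => a k + b k); intro; rewrite peval_plus, Ha, Hb; auto. Qed.
Lemma PolyLe_scal d c F : PolyLe d F -> PolyLe d (fun w => c * F w).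
Proof. intros [a Ha]; exists (fun k => c * a k); intro; rewrite peval_scal, Ha; auto. Qed.
Lemma PolyLe_mulw d F : PolyLe d F -> PolyLe (S d) (fun w => w * F w).
Proof. intros [a Ha]; eexists; intro; rewrite Ha, peval_mulw; reflexivity. Qed.
Lemma PolyLe_S d F : PolyLe d F -> PolyLe (S d) F.
Proof.
  intros [a Ha]. exists (fun k => if Nat.leb k d then a k else 0).
  intro w. rewrite peval_S, Ha. replace (Nat.leb (S d) d) with false.
  2:{ symmetry; apply Nat.leb_gt; lia. }
  rewrite Rmult_0_l, Rplus_0_r. apply peval_eq. intros k Hk.
  replace (Nat.leb k d) with true; auto. symmetry; apply Nat.leb_le; auto.
Qed.
Lemma PolyLe_mono d d' F : (d <= d')%nat -> PolyLe d F -> PolyLe d' F.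
Proof. induction 1; auto. intro; apply PolyLe_S; auto. Qed.
Lemma PolyLe_mon c p d : (p <= d)%nat -> PolyLe d (fun w => c * w ^ p).
Proof.
  intro H; apply (PolyLe_mono p); auto. clear H.
  induction p. apply PolyLe_ext with (fun _ => c). intro; simpl; ring. apply PolyLe_const.
  apply PolyLe_ext with (fun w => w * (c * w ^ p)). intro; simpl; ring.
  apply PolyLe_mulw; auto.
Qed.
Lemma PolyLe_hpow k : PolyLe (2 * k) (fun w => (w + w ^ 2) ^ k).
Proof.
  induction k.
  - apply PolyLe_ext with (fun _ => 1). intro; simpl; ring. apply PolyLe_const.
  - apply PolyLe_ext with (fun w => w * (w + w ^ 2) ^ k + w * (w * (w + w ^ 2) ^ k)).
    intro; simpl; ring.
    replace (2 * S k)%nat with (S (S (2 * k))) by lia.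
    apply PolyLe_plus. apply PolyLe_S, PolyLe_mulw; auto.
    apply PolyLe_mulw, PolyLe_mulw; auto.
Qed.
Lemma PolyLe_comp d F : PolyLe d F -> PolyLe (2 * d) (fun w => F (w + w ^ 2)).
Proof.
  intros [a Ha]. apply PolyLe_ext with (fun w => peval d a (w + w ^ 2)).
  intro; rewrite Ha; auto. clear Ha F.
  induction d.
  - apply PolyLe_ext with (fun _ => a O). intro; unfold peval; simpl; ring. apply PolyLe_const.
  - apply PolyLe_ext with (fun w => peval d a (w + w ^ 2) + a (S d) * (w + w ^ 2) ^ (S d)).
    intro; rewrite peval_S; auto.
    apply PolyLe_plus. apply (PolyLe_mono (2 * d)); [lia|auto].
    apply PolyLe_scal. apply PolyLe_hpow.
Qed.

Definition ww h := (sqrt (1 + 4 * h) - 1) / 2.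
Lemma ww_pos h : 0 < h -> 0 < ww h.
Proof.
  intro H; unfold ww. assert (1 < sqrt (1 + 4 * h)).
  { assert (Hs : sqrt 1 < sqrt (1 + 4 * h)) by (apply sqrt_lt_1; lra). rewrite sqrt_1 in Hs; exact Hs. } lra.
Qed.
Lemma ww_h h : 0 < h -> h = ww h + ww h ^ 2.
Proof.
  intro H; unfold ww. assert (E := sqrt_sqrt (1 + 4 * h) ltac:(lra)).
  set (s := sqrt (1 + 4 * h)) in *. nra.
Qed.
Lemma uu_sq h : 0 < h -> uu h ^ 2 = ww h.
Proof. intro H; unfold uu; simpl. rewrite Rmult_1_r, sqrt_sqrt; auto. fold (ww h); left; apply ww_pos; auto. Qed.
Lemma uu_pos h : 0 < h -> 0 < uu h.
Proof. intro H; unfold uu; apply sqrt_lt_R0; apply ww_pos; auto. Qed.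
Lemma h_uu h : 0 < h -> h = uu h ^ 2 + (uu h ^ 2) ^ 2.
Proof. intro H; rewrite uu_sq; auto; apply ww_h; auto. Qed.

Lemma sqrt_h h : 0 < h -> sqrt h = uu h * sqrt (1 + (uu h)²).
Proof.
  intro H. rewrite (h_uu h H) at 1.
  assert (0 < uu h) by (apply uu_pos; auto).
  replace (uu h ^ 2 + (uu h ^ 2) ^ 2) with ((uu h)² * (1 + (uu h)²)) by (unfold Rsqr; ring).
  rewrite sqrt_mult_alt. rewrite sqrt_Rsqr; lra. apply Rle_0_sqr.
Qed.
Lemma XA h : 0 < h -> X h (atan (uu h)) = uu h.
Proof.
  intro H; unfold X; rewrite cos_atan, sqrt_h; auto. field.
  apply Rgt_not_eq, sqrt_lt_R0. pose proof (Rle_0_sqr (uu h)); lra.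
Qed.
Lemma YA h : 0 < h -> Y h (atan (uu h)) = uu h ^ 2.
Proof.
  intro H; unfold Y; rewrite sin_atan, sqrt_h; auto. field.
  apply Rgt_not_eq, sqrt_lt_R0. pose proof (Rle_0_sqr (uu h)); lra.
Qed.
Lemma XD1 h : 0 < h -> X h (- PI - atan (uu h)) = - uu h.
Proof.
  intro H; rewrite <- (XA h H) at 2; unfold X.
  replace (- PI - atan (uu h)) with (- (atan (uu h) + PI)) by ring.
  rewrite cos_neg, neg_cos; ring.
Qed.
Lemma YD1 h : 0 < h -> Y h (- PI - atan (uu h)) = uu h ^ 2.
Proof.
  intro H; rewrite <- (YA h H); unfold Y.
  replace (- PI - atan (uu h)) with (- (atan (uu h) + PI)) by ring.
  rewrite sin_neg, neg_sin; ring.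
Qed.
Lemma XD2 h : 0 < h -> X h (PI - atan (uu h)) = - uu h.
Proof.
  intro H; rewrite <- (XA h H) at 2; unfold X.
  replace (PI - atan (uu h)) with (- atan (uu h) + PI) by ring.
  rewrite neg_cos, cos_neg; ring.
Qed.
Lemma YD2 h : 0 < h -> Y h (PI - atan (uu h)) = uu h ^ 2.
Proof.
  intro H; rewrite <- (YA h H); unfold Y.
  replace (PI - atan (uu h)) with (- atan (uu h) + PI) by ring.
  rewrite neg_sin, sin_neg; ring.
Qed.
Lemma XY2 h t : 0 <= h -> X h t ^ 2 + Y h t ^ 2 = h.
Proof.
  intro H; unfold X, Y. replace ((sqrt h * cos t) ^ 2 + (sqrt h * sin t) ^ 2)
   with (sqrt h * sqrt h * ((sin t)² + (cos t)²)) by (unfold Rsqr; ring).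
  rewrite sin2_cos2, sqrt_sqrt; auto; ring.
Qed.

Definition Endp d (E : R -> R) := exists F, PolyLe d F /\ forall h, 0 < h -> E h = uu h * F (uu h ^ 2).
Definition Kap d (k : R -> R) := exists F, PolyLe d F /\ forall h, 0 < h -> k h = h * F h.

Lemma Endp_plus d E1 E2 : Endp d E1 -> Endp d E2 -> Endp d (fun h => E1 h + E2 h).
Proof. intros [F [HF H1]] [G [HG H2]]; exists (fun w => F w + G w); split.
  apply PolyLe_plus; auto. intros h Hh; rewrite H1, H2; auto; ring. Qed.
Lemma Endp_scal d c E : Endp d E -> Endp d (fun h => c * E h).
Proof. intros [F [HF H1]]; exists (fun w => c * F w); split.
  apply PolyLe_scal; auto. intros h Hh; rewrite H1; auto; ring. Qed.
Lemma Endp_mono d d' E : (d <= d')%nat -> Endp d E -> Endp d' E.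
Proof. intros Hd [F [HF H1]]; exists F; split; auto. eapply PolyLe_mono; eauto. Qed.
Lemma Endp_zero d : Endp d (fun _ => 0).
Proof. exists (fun _ => 0); split. apply PolyLe_zero. intros; ring. Qed.
Lemma Endp_ext d E1 E2 : (forall h, 0 < h -> E1 h = E2 h) -> Endp d E1 -> Endp d E2.
Proof. intros He [F [HF H1]]; exists F; split; auto. intros; rewrite <- He, H1; auto. Qed.
Lemma Endp_h d E : Endp d E -> Endp (S (S d)) (fun h => h * E h).
Proof.
  intros [F [HF H1]]; exists (fun w => w * F w + w * (w * F w)); split.
  apply PolyLe_plus. apply PolyLe_S, PolyLe_mulw; auto. apply PolyLe_mulw, PolyLe_mulw; auto.
  intros h Hh; rewrite H1 by auto. assert (Eh := h_uu h Hh). set (u := uu h) in *. rewrite Eh. ring.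
Qed.
Lemma Endp_mondiff a b : (1 <= a + b)%nat ->
  Endp (a + b - 1) (fun h => uu h ^ a * (uu h ^ 2) ^ b - (- uu h) ^ a * (uu h ^ 2) ^ b).
Proof.
  intro Hab. destruct (Nat.Even_or_Odd a) as [[m Hm]|[m Hm]]; subst a.
  - apply Endp_ext with (fun _ => 0). 2: apply Endp_zero.
    intros h _. rewrite !pow_mult. replace ((- uu h) ^ 2) with (uu h ^ 2) by ring. ring.
  - exists (fun w => 2 * w ^ (m + b)); split. apply PolyLe_mon; lia.
    intros h _. rewrite pow_add, !pow_add, !pow_mult.
    replace ((- uu h) ^ 2) with (uu h ^ 2) by ring. simpl; ring.
Qed.

Lemma Kap_plus d E1 E2 : Kap d E1 -> Kap d E2 -> Kap d (fun h => E1 h + E2 h).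
Proof. intros [F [HF H1]] [G [HG H2]]; exists (fun w => F w + G w); split.
  apply PolyLe_plus; auto. intros h Hh; rewrite H1, H2; auto; ring. Qed.
Lemma Kap_scal d c E : Kap d E -> Kap d (fun h => c * E h).
Proof. intros [F [HF H1]]; exists (fun w => c * F w); split.
  apply PolyLe_scal; auto. intros h Hh; rewrite H1; auto; ring. Qed.
Lemma Kap_zero d : Kap d (fun _ => 0).
Proof. exists (fun _ => 0); split. apply PolyLe_zero. intros; ring. Qed.

Lemma isd_minus (f g : R -> R) (x df dg : R) : is_derive f x df -> is_derive g x dg ->
  is_derive (fun t => f t - g t) x (df - dg).
Proof. intros; now apply (is_derive_minus f g). Qed.
Lemma INR_S_pos k : 0 < INR (S k).
Proof. rewrite S_INR; pose proof (pos_INR k); lra. Qed.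

Definition MonoDec (k : nat) (P : R -> R -> R) :=
  exists c (Gf : R -> R -> R -> R),
   (forall h t, 0 < h -> is_derive (fun t => Gf h (X h t) (Y h t)) t
                          (P (X h t) (Y h t) - c * h ^ (k / 2))) /\
   (Nat.odd k = true -> c = 0) /\
   Endp (k - 1) (fun h => Gf h (uu h) (uu h ^ 2) - Gf h (- uu h) (uu h ^ 2)).

Lemma pow_dec : forall i, MonoDec (i + 0) (fun x y => x ^ i * y ^ 0).
Proof.
  intro i; induction i as [i IH] using lt_wf_ind.
  destruct i as [|[|[|i'']]].
  - exists 1, (fun _ _ _ => 0). split; [|split].
    + intros h t Hh. eapply isd_val; [|apply is_derive_const]. simpl; unfold zero; simpl; ring.
    + simpl; discriminate.
    + apply Endp_ext with (fun _ => 0); [intros; ring|apply Endp_zero].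
  - exists 0, (fun _ x y => x ^ 0 * y ^ 1). split; [|split].
    + intros h t Hh. eapply isd_val; [|apply dmono]. simpl; ring.
    + auto.
    + apply Endp_ext with (fun _ => 0); [intros; simpl; ring|apply Endp_zero].
  - exists (/2), (fun _ x y => /2 * (x ^ 1 * y ^ 1)). split; [|split].
    + intros h t Hh. eapply isd_val; [|apply isd_scal, dmono].
      pose proof (XY2 h t (Rlt_le _ _ Hh)). simpl in *. nra.
    + simpl; discriminate.
    + eapply Endp_ext; [|apply (Endp_scal _ (/2)); apply (Endp_mondiff 1 1); lia].
      intros h _; simpl; ring.
  - set (i' := S i''). destruct (IH i') as [c' [G' [HD [HO HE]]]]. unfold i'; lia.
    assert (Hi' : (1 <= i')%nat) by (unfold i'; lia).
    change (S (S (S i''))) with (S (S i')). clearbody i'. clear IH.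
    rewrite Nat.add_0_r in *.
    assert (Hdiv : ((S (S i')) / 2 = S (i' / 2))%nat).
    { replace (S (S i')) with (i' + 1 * 2)%nat by lia.
      rewrite Nat.div_add; lia. }
    exists (INR (S i') / INR (S (S i')) * c'),
      (fun h x y => / INR (S (S i')) * (x ^ (S i') * y ^ 1 + INR (S i') * h * G' h x y)).
    split; [|split].
    + intros h t Hh. rewrite Hdiv.
      eapply isd_val; [|apply isd_scal, isd_plus; [apply dmono | apply isd_scal, HD; auto]].
      pose proof (XY2 h t (Rlt_le _ _ Hh)). pose proof (INR_S_pos (S i')).
      rewrite (S_INR (S i')) in *. cbn [pred pow]. change (INR 1) with 1.
      replace (Y h t * (Y h t * 1)) with (h - X h t ^ 2) by (simpl in *; lra).
      field. lra.
    + intro Ho. rewrite HO. ring. exact Ho.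
    + replace (S (S i') - 1)%nat with (S i' + 1 - 1)%nat by lia.
      eapply Endp_ext; [| apply (Endp_scal _ (/ INR (S (S i')))); apply Endp_plus;
         [apply (Endp_mondiff (S i') 1); lia | apply (Endp_scal _ (INR (S i'))) ] ].
      2:{ replace (S i' + 1 - 1)%nat with (S (S (i' - 1))) by lia.
          apply Endp_h; exact HE. }
      intros h _; simpl; ring.
Qed.

Lemma mono_dec : forall j i, MonoDec (i + j) (fun x y => x ^ i * y ^ j).
Proof.
  intro j; induction j as [j IH] using lt_wf_ind.
  destruct j as [|[|j']]; intro i.
  - apply pow_dec.
  - exists 0, (fun _ x y => - / INR (S i) * (x ^ (S i) * y ^ 0)). split; [|split].
    + intros h t Hh. eapply isd_val; [|apply isd_scal, dmono].
      pose proof (INR_S_pos i). cbn [pred]. change (INR 0) with 0. field. lra.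
    + auto.
    + replace (i + 1 - 1)%nat with (S i + 0 - 1)%nat by lia.
      eapply Endp_ext; [|apply (Endp_scal _ (- / INR (S i))); apply (Endp_mondiff (S i) 0); lia].
      intros h _; cbv beta; ring.
  - destruct (IH j' ltac:(lia) (S (S i))) as [c' [G' [HD [HO HE]]]].
    replace (i + S (S j'))%nat with (S (S i) + j')%nat by lia.
    exists (INR (S j') / INR (S i) * c'),
      (fun h x y => / INR (S i) * (INR (S j') * G' h x y - x ^ (S i) * y ^ (S j'))).
    split; [|split].
    + intros h t Hh.
      eapply isd_val; [|apply isd_scal, isd_minus; [apply isd_scal, HD; auto | apply dmono]].
      pose proof (INR_S_pos i). cbn [pred]. field. lra.
    + intro Ho; rewrite HO; auto; ring.
    + eapply Endp_ext; [|apply (Endp_scal _ (/ INR (S i))); apply Endp_plus;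
        [apply (Endp_scal _ (INR (S j'))); exact HE
        | apply (Endp_scal _ (-1)); replace (S (S i) + j' - 1)%nat with (S i + S j' - 1)%nat by lia;
          apply (Endp_mondiff (S i) (S j')); lia]].
      intros h _; cbv beta; ring.
Qed.

Definition DecAll (n : nat) (P : R -> R -> R) :=
  exists (kap : R -> R) (Gf : R -> R -> R -> R),
   (forall h t, 0 < h -> is_derive (fun t => Gf h (X h t) (Y h t)) t (P (X h t) (Y h t) - kap h)) /\
   (forall h t, ex_derive (fun t => P (X h t) (Y h t)) t) /\
   Kap ((n - 1) / 2) kap /\
   Endp n (fun h => Gf h (uu h) (uu h ^ 2) - Gf h (- uu h) (uu h ^ 2)).

Lemma DecAll_ext n P Q : (forall x y, P x y = Q x y) -> DecAll n P -> DecAll n Q.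
Proof.
  intros He [k [G [H1 [H2 [H3 H4]]]]]. exists k, G; split; [|split;[|split]]; auto.
  - intros h t Hh; rewrite <- He; auto.
  - intros h t. eapply ex_derive_ext; [|apply (H2 h t)]. intro; simpl; auto.
Qed.
Lemma DecAll_zero n : DecAll n (fun _ _ => 0).
Proof.
  exists (fun _ => 0), (fun _ _ _ => 0). split; [|split;[|split]].
  - intros h t _. eapply isd_val; [|apply is_derive_const]. unfold zero; simpl; ring.
  - intros; apply ex_derive_const.
  - apply Kap_zero.
  - eapply Endp_ext; [|apply Endp_zero]. intros; simpl; ring.
Qed.
Lemma DecAll_plus n P Q : DecAll n P -> DecAll n Q -> DecAll n (fun x y => P x y + Q x y).
Proof.
  intros [k [G [H1 [H2 [H3 H4]]]]] [k' [G' [H1' [H2' [H3' H4']]]]].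
  exists (fun h => k h + k' h), (fun h x y => G h x y + G' h x y).
  split; [|split;[|split]].
  - intros h t Hh. eapply isd_val; [|apply isd_plus; [apply H1|apply H1']; auto]. ring.
  - intros h t; apply exd_plus; auto.
  - apply Kap_plus; auto.
  - eapply Endp_ext; [|apply Endp_plus; [exact H4|exact H4']]. intros; simpl; ring.
Qed.
Lemma DecAll_scal n c P : DecAll n P -> DecAll n (fun x y => c * P x y).
Proof.
  intros [k [G [H1 [H2 [H3 H4]]]]].
  exists (fun h => c * k h), (fun h x y => c * G h x y).
  split; [|split;[|split]].
  - intros h t Hh. eapply isd_val; [|apply isd_scal; apply H1; auto]. ring.
  - intros h t; apply ex_derive_scal; auto.
  - apply Kap_scal; auto.
  - eapply Endp_ext; [|apply (Endp_scal _ c); exact H4]. intros; simpl; ring.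
Qed.
Lemma DecAll_sum n F N : (forall i, (i <= N)%nat -> DecAll n (F i)) ->
  DecAll n (fun x y => sum_f_R0 (fun i => F i x y) N).
Proof.
  induction N; intro H.
  - simpl. apply H; lia.
  - simpl. apply DecAll_plus. apply IHN; intros; apply H; lia. apply H; lia.
Qed.

Lemma DecAll_mono n i j : (1 <= i + j <= S n)%nat -> DecAll n (fun x y => x ^ i * y ^ j).
Proof.
  intro Hk. destruct (mono_dec j i) as [c [G [H1 [H2 H3]]]].
  exists (fun h => c * h ^ ((i + j) / 2)), G. split; [|split;[|split]].
  - auto.
  - intros h t. eexists. apply dmono.
  - destruct (Nat.Even_or_Odd (i + j)) as [[m Hm]|[m Hm]].
    + rewrite Hm. replace (2 * m / 2)%nat with m by (rewrite Nat.mul_comm, Nat.div_mul; lia).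
      exists (fun w => c * w ^ (m - 1)). split.
      * apply PolyLe_mon. apply Nat.div_le_lower_bound; lia.
      * intros h _. replace m with (S (m - 1)) at 1 by lia. simpl; ring.
    + rewrite H2. exists (fun _ => 0); split. apply PolyLe_zero. intros; ring.
      rewrite Hm, Nat.odd_odd; auto.
  - eapply Endp_mono; [|exact H3]. lia.
Qed.

Lemma Rint_deriv (F G : R -> R) a b : (forall t, is_derive G t (F t)) ->
  (forall t, continuous F t) -> Rint F a b = G b - G a.
Proof.
  intros HD HC.
  assert (HI : is_RInt F a b (minus (G b) (G a))).
  { apply (is_RInt_derive (V := R_CompleteNormedModule) G F); intros; auto. }
  assert (Hex : ex_RInt F a b) by (eexists; exact HI).
  unfold Rint.
  assert (HP : exists I, exists pr : Riemann_integrable F a b, RiemannInt pr = I).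
  { exists (RiemannInt (ex_RInt_Reals_0 _ _ _ Hex)). eexists; reflexivity. }
  destruct (epsilon_spec (inhabits 0) _ HP) as [pr Hpr].
  rewrite <- Hpr, <- RInt_Reals. rewrite (is_RInt_unique (V := R_CompleteNormedModule) F a b _ HI). reflexivity.
Qed.

Lemma arc_gen (P : R -> R -> R) (Gf : R -> R -> R -> R) (kap : R -> R) h t0 t1 :
  (forall t, is_derive (fun t => Gf h (X h t) (Y h t)) t (P (X h t) (Y h t) - kap h)) ->
  (forall t, ex_derive (fun t => P (X h t) (Y h t)) t) ->
  Rint (fun t => P (X h t) (Y h t)) t1 t0 =
    (Gf h (X h t0) (Y h t0) - Gf h (X h t1) (Y h t1)) + kap h * (t0 - t1).
Proof.
  intros HD HE.
  rewrite (Rint_deriv _ (fun t => Gf h (X h t) (Y h t) + kap h * t)). ring.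
  - intro t. eapply isd_val; [|apply isd_plus; [apply HD| apply isd_scal, is_derive_id]].
    unfold one; simpl; ring.
  - intro t; apply (ex_derive_continuous (K := R_AbsRing) (V := R_NormedModule)); auto.
Qed.

Definition Pgf (g f : R -> R -> R) := fun x y => -1 * (g x y * y) + -1 * (f x y * x).

Lemma arcint_eq g f h t0 t1 : arcint g f h t0 t1 = - Rint (fun t => Pgf g f (X h t) (Y h t)) t1 t0.
Proof.
  unfold arcint, Pgf, X, Y. f_equal. f_equal. apply functional_extensionality; intro t. ring.
Qed.

Lemma sum_mulr f N y : sum_f_R0 f N * y = sum_f_R0 (fun i => f i * y) N.
Proof. induction N; simpl; auto. rewrite <- IHN; ring. Qed.

Lemma DecAll_gy n c : deg2_le n c -> DecAll n (fun x y => peval2 n c x y * y).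
Proof.
  intro Hc.
  apply DecAll_ext with (fun x y => sum_f_R0 (fun i => sum_f_R0 (fun j => c i j * (x ^ i * y ^ (S j))) n) n).
  { intros x y. unfold peval2. rewrite sum_mulr. apply sum_eq; intros i _.
    rewrite sum_mulr. apply sum_eq; intros j _. simpl; ring. }
  apply DecAll_sum; intros i _. apply DecAll_sum; intros j _.
  destruct (le_lt_dec (i + S j) (S n)).
  - apply DecAll_scal, DecAll_mono; lia.
  - rewrite (Hc i j) by lia. eapply DecAll_ext; [|apply DecAll_zero]. intros; simpl; ring.
Qed.
Lemma DecAll_fx n c : deg2_le n c -> DecAll n (fun x y => peval2 n c x y * x).
Proof.
  intro Hc.
  apply DecAll_ext with (fun x y => sum_f_R0 (fun i => sum_f_R0 (fun j => c i j * (x ^ (S i) * y ^ j)) n) n).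
  { intros x y. unfold peval2. rewrite sum_mulr. apply sum_eq; intros i _.
    rewrite sum_mulr. apply sum_eq; intros j _. simpl; ring. }
  apply DecAll_sum; intros i _. apply DecAll_sum; intros j _.
  destruct (le_lt_dec (S i + j) (S n)).
  - apply DecAll_scal, DecAll_mono; lia.
  - rewrite (Hc i j) by lia. eapply DecAll_ext; [|apply DecAll_zero]. intros; simpl; ring.
Qed.
Lemma DecAll_P n g f : deg2_le n g -> deg2_le n f -> DecAll n (Pgf (peval2 n g) (peval2 n f)).
Proof.
  intros Hg Hf. unfold Pgf. apply DecAll_plus; apply DecAll_scal.
  apply DecAll_gy; auto. apply DecAll_fx; auto.
Qed.

Lemma U00_eq h : 0 < h -> U 0 0 h = -2 * uu h.
Proof.
  intro Hh. unfold U, int_AD. rewrite arcint_eq, (arc_gen _ (fun _ x y => x) (fun _ => 0)).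
  - rewrite XA, XD1 by auto. ring.
  - intro t; unfold Pgf, X, Y; auto_derive; auto. ring.
  - intro t; unfold Pgf, X, Y; auto_derive; auto.
Qed.
Lemma V00_eq h : 0 < h -> V 0 0 h = 2 * uu h.
Proof.
  intro Hh. unfold V, int_DA. rewrite arcint_eq, (arc_gen _ (fun _ x y => x) (fun _ => 0)).
  - rewrite XA, XD2 by auto. ring.
  - intro t; unfold Pgf, X, Y; auto_derive; auto. ring.
  - intro t; unfold Pgf, X, Y; auto_derive; auto.
Qed.
Lemma U01_eq h : 0 < h -> U 0 1 h = - uu h ^ 3 + h / 2 * (PI + 2 * atan (uu h)).
Proof.
  intro Hh. unfold U, int_AD. rewrite arcint_eq, (arc_gen _ (fun _ x y => x * y / 2) (fun h => - h / 2)).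
  - rewrite XA, XD1, YA, YD1 by auto. field.
  - intro t; unfold Pgf, X, Y; auto_derive; auto.
    pose proof (sqrt_sqrt h (Rlt_le _ _ Hh)); pose proof (sin2_cos2 t); unfold Rsqr in *. nra.
  - intro t; unfold Pgf, X, Y; auto_derive; auto.
Qed.
Lemma V01_eq h : 0 < h -> V 0 1 h = uu h ^ 3 + h / 2 * (PI - 2 * atan (uu h)).
Proof.
  intro Hh. unfold V, int_DA. rewrite arcint_eq, (arc_gen _ (fun _ x y => x * y / 2) (fun h => - h / 2)).
  - rewrite XA, XD2, YA, YD2 by auto. field.
  - intro t; unfold Pgf, X, Y; auto_derive; auto.
    pose proof (sqrt_sqrt h (Rlt_le _ _ Hh)); pose proof (sin2_cos2 t); unfold Rsqr in *. nra.
  - intro t; unfold Pgf, X, Y; auto_derive; auto.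
Qed.

Lemma Endp_F_u3 m n F : PolyLe m F -> (S (2 * m) <= n)%nat -> Endp n (fun h => F h * uu h ^ 3).
Proof.
  intros HF Hm. exists (fun w => w * F (w + w ^ 2)). split.
  - eapply PolyLe_mono; [exact Hm|]. apply PolyLe_mulw, PolyLe_comp; auto.
  - intros h Hh. assert (Eh := h_uu h Hh). set (u := uu h) in *. rewrite Eh at 1. ring.
Qed.

Lemma peval_split n q t : (1 <= n)%nat -> peval n q t = q O + t * peval (n - 1) (fun k => q (S k)) t.
Proof.
  intro Hn. destruct n as [|n]; [lia|]. replace (S n - 1)%nat with n by lia.
  rewrite (peval_eq _ q (fun k => (match k with O => q O | _ => 0 end) +
                                  (match k with O => 0 | S k => q (S k) end))).
  - rewrite peval_plus, peval_c0. 2:{ intros [|k] Hk; [lia|auto]. }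
    rewrite peval_mulw. reflexivity.
  - intros [|k] _; ring.
Qed.

Lemma Rpower32 x : 0 < x -> Rpower x (3 / 2) = x * sqrt x.
Proof.
  intro Hx. replace (3 / 2) with (1 + / 2) by field.
  rewrite Rpower_plus, Rpower_1, Rpower_sqrt; auto.
Qed.

Theorem lemma4p1 (n : nat) (f1 g1 f2 g2 : nat -> nat -> R) :
  (1 <= n)%nat ->
  deg2_le n f1 -> deg2_le n g1 -> deg2_le n f2 -> deg2_le n g2 ->
  exists (al be ga de phi : nat -> R),
    forall h : R, 0 < h ->
      let w := (sqrt (1 + 4 * h) - 1) / 2 in
      melnikov n f1 g1 f2 g2 h =
        peval (n / 2) al h * U 0 0 h + peval ((n - 1) / 2) be h * U 0 1 h
        + peval (n / 2) ga h * V 0 0 h + peval ((n - 1) / 2) de h * V 0 1 h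
        + Rpower w (3 / 2) * peval (n - 1) phi w.
Proof.
  intros Hn Hf1 Hg1 Hf2 Hg2.
  destruct (DecAll_P n g1 f1 Hg1 Hf1) as [k1 [G1 [D1 [E1 [K1 N1]]]]].
  destruct (DecAll_P n g2 f2 Hg2 Hf2) as [k2 [G2 [D2 [E2 [K2 N2]]]]].
  destruct K1 as [F1 [HF1 Hk1]]. destruct K2 as [F2 [HF2 Hk2]].
  assert (Hm : (S (2 * ((n - 1) / 2)) <= n)%nat).
  { pose proof (Nat.Div0.mul_div_le (n - 1) 2). lia. }
  assert (HR : Endp n (fun h => -1 * (G1 h (uu h) (uu h ^ 2) - G1 h (- uu h) (uu h ^ 2))
                              + (G2 h (uu h) (uu h ^ 2) - G2 h (- uu h) (uu h ^ 2))
                              + -2 * (F1 h * uu h ^ 3) + 2 * (F2 h * uu h ^ 3))).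
  { apply Endp_plus; [apply Endp_plus; [apply Endp_plus|]|].
    - apply (Endp_scal _ (-1)); exact N1.
    - exact N2.
    - apply (Endp_scal _ (-2)). eapply Endp_F_u3; eauto.
    - apply (Endp_scal _ 2). eapply Endp_F_u3; eauto. }
  destruct HR as [Q [[q Hq] HRq]].
  destruct HF1 as [b1 Hb1]. destruct HF2 as [b2 Hb2].
  exists (fun k => match k with O => - q O / 2 | _ => 0 end), (fun k => -2 * b1 k),
    (fun _ => 0), (fun k => -2 * b2 k), (fun k => q (S k)).
  intros h Hh w. subst w. fold (ww h).
  rewrite peval_c0 by (intros [|k] Hk; [lia|auto]).
  rewrite !peval_scal, peval_zero, <- Hb1, <- Hb2.
  rewrite U00_eq, U01_eq, V00_eq, V01_eq by auto.
  rewrite Rpower32 by (apply ww_pos; auto).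
  change (sqrt (ww h)) with (uu h).
  rewrite <- (uu_sq h Hh).
  specialize (HRq h Hh). cbv beta in HRq. rewrite Hq, peval_split in HRq by auto.
  unfold melnikov, int_AD, int_DA. rewrite !arcint_eq.
  rewrite (arc_gen _ G1 k1 h _ _ (fun t => D1 h t Hh) (E1 h)).
  rewrite (arc_gen _ G2 k2 h _ _ (fun t => D2 h t Hh) (E2 h)).
  rewrite XA, XD1, YA, YD1, XD2, YD2 by auto.
  rewrite (Hk1 h Hh), (Hk2 h Hh).
  set (u := uu h) in *. set (th := atan u) in *.
  simpl in *. nra.
Qed.
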